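(* In the setting of the context, let $\mu^*\in W_1$. Given $n\ge1$ and $\alpha\in\mathcal{I}_n(f_{\mu^*})$, there exist $c=c(\alpha)>0$ and $\delta=\delta(\alpha)>0$ such that for every $\mu$ with $\|\mu-\mu^*\|<\delta$ (and $\|\mu-\mu^*\|<1$) we have $\alpha\in\mathcal{I}_n(f_\mu)$ and $d_H(A^\alpha_\mu,A^\alpha_{\mu^*})\le c\|\mu-\mu^*\|$.
   Context: $X\subset\mathbb{R}^d$ is a compact convex polytope (possibly not full-dimensional) with relative interior $\mathrm{relint}(X)$. $\ell\ge1$, $\mathcal{A}=\{-1,1\}^\ell$, $\varphi_i(x)=\Lambda_ix+b_i$ ($i\in\mathcal{A}$) with $\Lambda_i\in GL_d(\mathbb{R})$, $\|\Lambda_i\|<1$ in some operator norm, and $\varphi_i(X)\subset\mathrm{relint}(X)$. $v^{(1)},\dots,v^{(\ell)}$ are unit vectors in $\mathbb{R}^d$, $H_j(\mu)=\{x:\langle v^{(j)},x\rangle=\mu_j\}$. Label map: $\sigma_\mu(x)=(s_1(x),\dots,s_\ell(x))$, $s_j(x)=-1$ if $\langle v^{(j)},x\rangle\le\mu_j$ and $1$ otherwise; $f_\mu(x)=\varphi_{\sigma_\mu(x)}(x)$ on $X$. $A_{i,\mu}=\mathrm{relint}(X)\cap\mathrm{relint}(\{x\in X:\sigma_\mu(x)=i\})$. For $\alpha=(i_0,\dots,i_{n-1})$: $A^\alpha_\mu=A_{i_0,\mu}\cap\varphi_{i_0}^{-1}(A_{i_1,\mu})\cap\cdots\cap(\varphi_{i_{n-2}}\circ\cdots\circ\varphi_{i_0})^{-1}(A_{i_{n-1},\mu})$.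 $\mathcal{I}_n(f_\mu)=\{\alpha\in\mathcal{A}^n:A^\alpha_\mu\ne\emptyset\}$ (the itineraries of order $n$). $Z_\alpha=\{\mu\in\mathbb{R}^\ell:A^\alpha_\mu\neq\emptyset\}$ and $W_1=\mathbb{R}^\ell\setminus\bigcup_{n\ge1}\bigcup_{\alpha\in\mathcal{A}^n}\partial Z_\alpha$. $d_H$ is the Hausdorff distance (with respect to the Euclidean metric). *)

(* Defs.v *)
From HB Require Import structures.
From mathcomp Require Import all_boot all_order all_algebra.
From mathcomp Require Import all_classical all_reals all_analysis.
Set Implicit Arguments. Unset Strict Implicit. Unset Printing Implicit Defensive.
Import Order.TTheory GRing.Theory Num.Theory.
Local Open Scope classical_set_scope.
Local Open Scope ring_scope.

Section IFSDefs.
Variable R : realType.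

Definition inner (d : nat) (u x : 'cV[R]_d) : R := \sum_(k < d) u k 0 * x k 0.
Definition enorm (d : nat) (x : 'cV[R]_d) : R := Num.sqrt (\sum_(k < d) x k 0 ^+ 2).

Definition conv_hull (d m : nat) (p : 'I_m -> 'cV[R]_d) : set 'cV[R]_d :=
  [set x | exists w : 'I_m -> R, (forall k, 0 <= w k) /\ \sum_(k < m) w k = 1 /\
     x = \sum_(k < m) w k *: p k].

Definition is_polytope (d : nat) (X : set 'cV[R]_d) : Prop :=
  exists (m : nat) (p : 'I_m -> 'cV[R]_d), (0 < m)%N /\ X = conv_hull p.

Definition aff_hull (d : nat) (S : set 'cV[R]_d) : set 'cV[R]_d :=
  [set x | exists (m : nat) (p : 'I_m -> 'cV[R]_d) (w : 'I_m -> R),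
     (forall k, S (p k)) /\ \sum_(k < m) w k = 1 /\ x = \sum_(k < m) w k *: p k].

Definition relint (d : nat) (S : set 'cV[R]_d) : set 'cV[R]_d :=
  [set x | S x /\ exists e : R, 0 < e /\
     forall y, aff_hull S y -> enorm (y - x) < e -> S y].

Definition is_norm (d : nat) (N : 'cV[R]_d -> R) : Prop :=
  (forall x, 0 <= N x) /\ (forall x, N x = 0 -> x = 0) /\
  (forall (a : R) x, N (a *: x) = `|a| * N x) /\
  (forall x y, N (x + y) <= N x + N y).

Definition opnorm (d : nat) (N : 'cV[R]_d -> R) (L : 'M[R]_d) : \bar R :=
  ereal_sup [set (N (L *m x))%:E | x in [set x | N x <= 1]].

Definition hausdorff (d : nat) (A B : set 'cV[R]_d) : \bar R :=
  Order.max
    (ereal_sup [set ereal_inf [set (enorm (a - b))%:E | b in B] | a in A])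
    (ereal_sup [set ereal_inf [set (enorm (a - b))%:E | a in A] | b in B]).

Definition boundary (l : nat) (Z : set 'cV[R]_l) : set 'cV[R]_l :=
  [set mu | forall e : R, 0 < e ->
     (exists nu, Z nu /\ enorm (nu - mu) < e) /\
     (exists nu, ~ Z nu /\ enorm (nu - mu) < e)].

(* Labels: A = {-1,1}^l, encoded as {ffun 'I_l -> bool}, true = 1, false = -1. *)
Definition label (l : nat) := {ffun 'I_l -> bool}.

Variables (d l : nat).
Variables (X : set 'cV[R]_d) (Lam : label l -> 'M[R]_d) (b : label l -> 'cV[R]_d)
          (v : 'I_l -> 'cV[R]_d).

Definition phi (i : label l) (x : 'cV[R]_d) : 'cV[R]_d := Lam i *m x + b i.

Definition sigma (mu : 'cV[R]_l) (x : 'cV[R]_d) : label l :=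
  [ffun j => (mu j 0 < inner (v j) x)%R].

Definition Aset (mu : 'cV[R]_l) (i : label l) : set 'cV[R]_d :=
  relint X `&` relint [set x | X x /\ sigma mu x = i].

Definition comp_phi (s : seq (label l)) (x : 'cV[R]_d) : 'cV[R]_d :=
  foldl (fun y i => phi i y) x s.

Definition Aalpha (mu : 'cV[R]_l) (n : nat) (alpha : n.-tuple (label l)) : set 'cV[R]_d :=
  [set x | forall k : 'I_n,
     Aset mu (tnth alpha k) (comp_phi (take k alpha) x)].

Definition itin (mu : 'cV[R]_l) (n : nat) : set (n.-tuple (label l)) :=
  [set alpha | Aalpha mu alpha !=set0].

Definition Zset (n : nat) (alpha : n.-tuple (label l)) : set 'cV[R]_l :=
  [set mu | Aalpha mu alpha !=set0].

Definition W1 : set 'cV[R]_l :=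
  [set mu | forall (n : nat) (alpha : n.-tuple (label l)), (0 < n)%N ->
     ~ boundary (Zset alpha) mu].

End IFSDefs.

(* Main.v *)
Require Import Defs.
From HB Require Import structures.
From mathcomp Require Import all_boot all_order all_algebra.
From mathcomp Require Import all_classical all_reals all_analysis.
From mathcomp Require Import ring lra.
Import Order.TTheory GRing.Theory Num.Theory.
Local Open Scope classical_set_scope.
Local Open Scope ring_scope.
Set Implicit Arguments. Unset Strict Implicit. Unset Printing Implicit Defensive.
Section Norm.
Variable R : realType.
Variable d : nat.
Implicit Types x y : 'cV[R]_d.

Lemma sumsq_ge0 x : 0 <= \sum_(k < d) x k 0 ^+ 2.
Proof. by apply: sumr_ge0 => k _; rewrite sqr_ge0. Qed.

Lemma enorm_ge0 x : 0 <= enorm x.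
Proof. exact: sqrtr_ge0. Qed.

Lemma enormZ (a : R) x : enorm (a *: x) = `|a| * enorm x.
Proof.
rewrite /enorm -sqrtr_sqr -sqrtrM ?sqr_ge0 //; congr Num.sqrt.
rewrite mulr_sumr; apply: eq_bigr => k _; by rewrite mxE exprMn.
Qed.

Lemma enorm0 : enorm (0 : 'cV[R]_d) = 0.
Proof. by have := enormZ 0 0; rewrite scale0r normr0 mul0r. Qed.

Lemma enorm_eq0 x : enorm x = 0 -> x = 0.
Proof.
rewrite /enorm => /eqP; rewrite sqrtr_eq0 => H.
have H0 : \sum_(k < d) x k 0 ^+ 2 = 0 by apply/eqP; rewrite eq_le H sumsq_ge0.
apply/matrixP => i j; rewrite ord1 mxE.
have /eqP : x i 0 ^+ 2 = 0.
  apply/eqP; rewrite eq_le sqr_ge0 andbT -H0.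
  rewrite (bigD1 i) //= lerDl; apply: sumr_ge0 => k _; exact: sqr_ge0.
by rewrite sqrf_eq0 => /eqP.
Qed.

Lemma enormN x : enorm (- x) = enorm x.
Proof. by rewrite -scaleN1r enormZ normrN normr1 mul1r. Qed.

Lemma enormB x y : enorm (x - y) = enorm (y - x).
Proof. by rewrite -enormN opprB. Qed.

Lemma cs_aux (a b : 'I_d -> R) :
  \sum_(k < d) a k * b k <=
  Num.sqrt (\sum_(k < d) a k ^+ 2) * Num.sqrt (\sum_(k < d) b k ^+ 2).
Proof.
set A := \sum_(k < d) a k ^+ 2; set B := \sum_(k < d) b k ^+ 2.
have A0 : 0 <= A by apply: sumr_ge0 => k _; exact: sqr_ge0.
have B0 : 0 <= B by apply: sumr_ge0 => k _; exact: sqr_ge0.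
set sA := Num.sqrt A; set sB := Num.sqrt B.
have key : 2 * (sA * sB) * \sum_(k < d) a k * b k <= 2 * (A * B).
  have -> : 2 * (A * B) = \sum_(k < d) (sB ^+ 2 * a k ^+ 2 + sA ^+ 2 * b k ^+ 2).
    rewrite big_split /= -!mulr_sumr /sA /sB !sqr_sqrtr // -/A -/B; ring.
  rewrite mulr_sumr; apply: ler_sum => k _.
  have := sqr_ge0 (sB * a k - sA * b k); lra.
have [sAB0|sABpos] := eqVneq (sA * sB) 0.
  rewrite sAB0.
  move: sAB0 => /eqP; rewrite mulf_eq0 => /orP[] /eqP; rewrite /sA /sB => /eqP;
    rewrite sqrtr_eq0 => H.
  - have H0 : A = 0 by apply/eqP; rewrite eq_le H A0.
    rewrite big1 // => k _.
    have : a k ^+ 2 = 0.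
      apply/eqP; rewrite eq_le sqr_ge0 andbT -H0 /A.
      rewrite (bigD1 k) //= lerDl; apply: sumr_ge0 => i _; exact: sqr_ge0.
    by move/eqP; rewrite sqrf_eq0 => /eqP ->; rewrite mul0r.
  - have H0 : B = 0 by apply/eqP; rewrite eq_le H B0.
    rewrite big1 // => k _.
    have : b k ^+ 2 = 0.
      apply/eqP; rewrite eq_le sqr_ge0 andbT -H0 /B.
      rewrite (bigD1 k) //= lerDl; apply: sumr_ge0 => i _; exact: sqr_ge0.
    by move/eqP; rewrite sqrf_eq0 => /eqP ->; rewrite mulr0.
have pos : 0 < sA * sB by rewrite lt_def sABpos mulr_ge0 // sqrtr_ge0.
have AB : A * B = (sA * sB) ^+ 2 by rewrite exprMn /sA /sB !sqr_sqrtr.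
rewrite AB in key.
have : 2 * (sA * sB) * (\sum_(k < d) a k * b k - sA * sB) <= 0 by lra.
rewrite pmulr_rle0 ?subr_le0 //; lra.
Qed.

Lemma enormD x y : enorm (x + y) <= enorm x + enorm y.
Proof.
rewrite /enorm -(ler_pXn2r (_ : 0 < 2)%N) ?nnegrE ?addr_ge0 ?sqrtr_ge0 //.
rewrite sqr_sqrtr; last by apply: sumr_ge0 => k _; exact: sqr_ge0.
rewrite sqrrD !sqr_sqrtr ?sumsq_ge0 //.
have := cs_aux (fun k => x k 0) (fun k => y k 0).
have -> : \sum_(k < d) (x + y) k 0 ^+ 2 =
   \sum_(k < d) x k 0 ^+ 2 + \sum_(k < d) y k 0 ^+ 2 + 2 * \sum_(k < d) x k 0 * y k 0.
  rewrite mulr_sumr -!big_split /=; apply: eq_bigr => k _; rewrite mxE; lra.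
lra.
Qed.

End Norm.
Section Aff.
Variable R : realType.
Variable d : nat.
Implicit Types x y q r w : 'cV[R]_d.

Lemma aff_of (C : set 'cV[R]_d) x : C x -> aff_hull C x.
Proof.
move=> Cx; exists 1%N, (fun _ => x), (fun _ => 1); split => //.
by rewrite big_ord1; split => //; rewrite big_ord1 scale1r.
Qed.

Lemma split_l m n (T : Type) (f : 'I_m -> T) (g : 'I_n -> T) (i : 'I_m) :
  match fintype.split (lshift n i) with inl j => f j | inr k => g k end = f i.
Proof.
case: split_ordP => [j /lshift_inj -> // | k /eqP]; by rewrite eq_lrshift.
Qed.

Lemma split_r m n (T : Type) (f : 'I_m -> T) (g : 'I_n -> T) (i : 'I_n) :
  match fintype.split (rshift m i) with inl j => f j | inr k => g k end = g i.
Proof.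
case: split_ordP => [j /eqP | k /rshift_inj -> //]; by rewrite eq_rlshift.
Qed.

Lemma aff_comb (C : set 'cV[R]_d) x y (al be : R) :
  aff_hull C x -> aff_hull C y -> al + be = 1 -> aff_hull C (al *: x + be *: y).
Proof.
move=> [m [p [w [Cp [w1 ->]]]]] [m' [p' [w' [Cp' [w1' ->]]]]] ab.
pose P (k : 'I_(m + m')) := match fintype.split k with inl i => p i | inr i => p' i end.
pose W (k : 'I_(m + m')) := match fintype.split k with inl i => al * w i | inr i => be * w' i end.
exists (m + m')%N, P, W; split.
  by move=> k; rewrite /P; case: (fintype.split k).
split.
  rewrite big_split_ord /W /=.
  rewrite (eq_bigr (fun i => al * w i)); last by move=> i _; case: (split_ordP (lshift m' i)) => [j /lshift_inj E | k /(congr1 val) /= E]; [by rewrite E | by move: (ltn_ord i); rewrite E ltnNge leq_addr].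
  rewrite [X in _ + X](eq_bigr (fun i => be * w' i)); last by move=> i _; case: (split_ordP (rshift m i)) => [j /(congr1 val) /= E | k /rshift_inj E]; [by move: (ltn_ord j); rewrite -E ltnNge leq_addr | by rewrite E].
  by rewrite -!mulr_sumr w1 w1' !mulr1.
rewrite big_split_ord /W /P /= !scaler_sumr; congr (_ + _); apply: eq_bigr => i _.
  case: (split_ordP (lshift m' i)) => [j /lshift_inj E | k /(congr1 val) /= E].
    by rewrite E scalerA.
  by move: (ltn_ord i); rewrite E ltnNge leq_addr.
case: (split_ordP (rshift m i)) => [j /(congr1 val) /= E | k /rshift_inj E].
  by move: (ltn_ord j); rewrite -E ltnNge leq_addr.
by rewrite E scalerA.
Qed.

Lemma relint_sub (C : set 'cV[R]_d) x : relint C x -> C x.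
Proof. by case. Qed.

Lemma relint_seg (C : set 'cV[R]_d) q r :
  relint C r ->
  (forall (s : R) r', 0 < s <= 1 -> C r' -> C ((1 - s) *: q + s *: r')) ->
  forall s : R, 0 < s <= 1 -> relint C ((1 - s) *: q + s *: r).
Proof.
move=> [Cr [e [e0 He]]] H s /andP[s0 s1].
split; first by apply: H => //; rewrite s0 s1.
have Cm : C ((1 - 2^-1) *: q + 2^-1 *: r).
  apply: H => //; apply/andP; split; [by rewrite invr_gt0|].
  rewrite invf_le1 //; lra.
have affq : aff_hull C q.
  have -> : q = 2 *: ((1 - 2^-1) *: q + 2^-1 *: r) + (-1) *: r.
    apply/matrixP => i j; rewrite !mxE; by field.
  by apply: aff_comb; [exact: aff_of|exact: aff_of|lra].
exists (s * e); split; first exact: mulr_gt0.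
move=> w affw hw.
have sn0 : s != 0 by rewrite gt_eqF.
pose r' := s^-1 *: w + (- ((1 - s) / s)) *: q.
have affr' : aff_hull C r'.
  apply: aff_comb => //; field; exact: sn0.
have Cr' : C r'.
  apply: He => //.
  have -> : r' - r = s^-1 *: (w - ((1 - s) *: q + s *: r)).
    apply/matrixP => i j; rewrite /r' !mxE; field; exact: sn0.
  rewrite enormZ ger0_norm ?invr_ge0 ?ltW //.
  by rewrite ltr_pdivrMl // mulrC.
have -> : w = (1 - s) *: q + s *: r'.
  apply/matrixP => i j; rewrite /r' !mxE; field; exact: sn0.
by apply: H => //; rewrite s0 s1.
Qed.

End Aff.
Section Geo.
Variable R : realType.
Variables (d l : nat).
Variables (X : set 'cV[R]_d) (Lam : label l -> 'M[R]_d) (b : label l -> 'cV[R]_d)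
          (v : 'I_l -> 'cV[R]_d).
Hypothesis polyX : is_polytope X.

Lemma X_convex x z (t : R) : X x -> X z -> 0 <= t <= 1 -> X ((1 - t) *: x + t *: z).
Proof.
case: polyX => m [p [m0 ->]] [w [w0 [w1 ->]]] [w' [w0' [w1' ->]]] /andP[t0 t1].
exists (fun k => (1 - t) * w k + t * w' k); split.
  move=> k; apply: addr_ge0; apply: mulr_ge0 => //; lra.
split.
  rewrite big_split /= -!mulr_sumr w1 w1' !mulr1; lra.
under [RHS]eq_bigr do rewrite scalerDl -!scalerA.
by rewrite big_split /= -!scaler_sumr.
Qed.

Lemma enorm_sum m (f : 'I_m -> 'cV[R]_d) :
  enorm (\sum_(k < m) f k) <= \sum_(k < m) enorm (f k).
Proof.
elim/big_rec2: _ => [|k a y _ IH]; first by rewrite enorm0.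
have := enormD (f k) y; lra.
Qed.

Lemma X_bound : exists D : R, 0 <= D /\ forall x z, X x -> X z -> enorm (x - z) <= D.
Proof.
case: polyX => m [p [m0 XE]].
pose M := \sum_(k < m) enorm (p k).
have M0 : 0 <= M by apply: sumr_ge0 => k _; exact: enorm_ge0.
have HM x : X x -> enorm x <= M.
  rewrite XE => -[w [w0 [w1 ->]]].
  apply: le_trans (enorm_sum _) _; apply: ler_sum => k _.
  rewrite enormZ ger0_norm //.
  have wk1 : w k <= 1.
    rewrite -w1 (bigD1 k) //= lerDl; exact: sumr_ge0.
  by rewrite -[X in _ <= X]mul1r ler_wpM2r // enorm_ge0.
exists (M + M); split; first exact: addr_ge0.
move=> x z Xx Xz; apply: le_trans (enormD _ _) _.
by rewrite enormN lerD // HM.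
Qed.

Lemma phi_comb i x z (t : R) :
  phi Lam b i ((1 - t) *: x + t *: z) = (1 - t) *: phi Lam b i x + t *: phi Lam b i z.
Proof.
rewrite /phi mulmxDr -!scalemxAr !scalerDr addrACA -scalerDl subrK scale1r.
by [].
Qed.

Lemma comp_comb s x z (t : R) :
  comp_phi Lam b s ((1 - t) *: x + t *: z) =
  (1 - t) *: comp_phi Lam b s x + t *: comp_phi Lam b s z.
Proof.
rewrite /comp_phi; elim: s x z => [//|i s IH] x z /=.
by rewrite phi_comb IH.
Qed.

Lemma inner_comb (u x z : 'cV[R]_d) (t : R) :
  inner u ((1 - t) *: x + t *: z) = (1 - t) * inner u x + t * inner u z.
Proof.
rewrite /inner !mulr_sumr -big_split /=; apply: eq_bigr => k _.
rewrite !mxE; ring.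
Qed.

End Geo.
Section Seg.
Variable R : realType.
Variables (d l : nat).
Variables (X : set 'cV[R]_d) (Lam : label l -> 'M[R]_d) (b : label l -> 'cV[R]_d)
          (v : 'I_l -> 'cV[R]_d).
Hypothesis polyX : is_polytope X.
Variables (n : nat) (alpha : n.-tuple (label l)).

Definition Pset (mu : 'cV[R]_l) (x : 'cV[R]_d) : Prop :=
  forall k : 'I_n, X (comp_phi Lam b (take k alpha) x) /\
    forall j, if tnth alpha k j then mu j 0 <= inner (v j) (comp_phi Lam b (take k alpha) x)
              else inner (v j) (comp_phi Lam b (take k alpha) x) <= mu j 0.

Lemma P_convex mu1 mu2 x z (t : R) : Pset mu1 x -> Pset mu2 z -> 0 <= t <= 1 ->
  Pset ((1 - t) *: mu1 + t *: mu2) ((1 - t) *: x + t *: z).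
Proof.
move=> H1 H2 t01 k; have [X1 C1] := H1 k; have [X2 C2] := H2 k.
rewrite comp_comb; split; first exact: X_convex.
move=> j; rewrite inner_comb !mxE.
move: (C1 j) (C2 j); case/andP: t01 => t0 t1.
have t0' : 0 <= 1 - t by lra.
case: (tnth alpha k j) => h1 h2.
- have := ler_wpM2l t0' h1; have := ler_wpM2l t0 h2; lra.
- have := ler_wpM2l t0' h1; have := ler_wpM2l t0 h2; lra.
Qed.

Lemma A_sub_P mu x : Aalpha X Lam b v mu alpha x -> Pset mu x.
Proof.
move=> H k; case: (H k) => [[Xy _] [[_ Hs] _]]; split => // j.
have := congr1 (fun f : label l => f j) Hs; rewrite ffunE => <-.
by case: ltP => h //; exact: ltW.
Qed.

Lemma A_sub_X mu x : (0 < n)%N -> Aalpha X Lam b v mu alpha x -> X x.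
Proof.
move=> n0 H; have [[Xy _] _] := H (Ordinal n0).
by rewrite take0 in Xy.
Qed.

Lemma seg mu a p (s : R) : Aalpha X Lam b v mu alpha a -> Pset mu p -> 0 < s <= 1 ->
  Aalpha X Lam b v mu alpha ((1 - s) *: p + s *: a).
Proof.
move=> HA HP s01 k; rewrite /Aset comp_comb.
have [Xq Cq] := HP k; have [rX rS] := HA k.
split.
  apply: relint_seg rX _ s s01 => s' r' /andP[s0 s1] Xr'.
  apply: X_convex => //; apply/andP; split => //; exact: ltW.
apply: relint_seg rS _ s s01 => s' r' /andP[s0 s1] [Xr' Hr'].
split; first by apply: X_convex => //; apply/andP; split => //; exact: ltW.
apply/ffunP => j; rewrite !ffunE.
have := congr1 (fun f : label l => f j) Hr'; rewrite ffunE => E.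
move: (Cq j); rewrite -E inner_comb.
have s0' : 0 <= 1 - s' by lra.
case: (ltP (mu j 0) (inner (v j) r')) => h hq.
- have := ler_wpM2l s0' hq.
  have h2 : s' * mu j 0 < s' * inner (v j) r'.
    by rewrite ltr_pM2l.
  move=> h3; apply/idP; lra.
- have := ler_wpM2l s0' hq.
  have h2 : s' * inner (v j) r' <= s' * mu j 0 by rewrite ler_pM2l.
  move=> h3; apply/negbTE; rewrite -leNgt; lra.
Qed.

Lemma dist_P mu (x p : 'cV[R]_d) (B : R) :
  Aalpha X Lam b v mu alpha !=set0 -> Pset mu p -> enorm (x - p) <= B ->
  (ereal_inf [set (enorm (x - y))%:E | y in Aalpha X Lam b v mu alpha] <= B%:E)%E.
Proof.
move=> [a0 Ha0] Hp HB; apply/lee_addgt0Pr => eps eps0.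
set D' := enorm (p - a0).
have D0 : 0 <= D' by exact: enorm_ge0.
pose s := Num.min 1 (eps / (D' + 1)).
have s0 : 0 < s by rewrite lt_min ltr01 divr_gt0 //; lra.
have s1 : s <= 1 by rewrite ge_min lexx.
have sD : s * D' <= eps.
  apply: (@le_trans _ _ (eps / (D' + 1) * D')).
    by apply: ler_wpM2r => //; rewrite ge_min lexx orbT.
  rewrite mulrAC ler_pdivrMr; last by lra.
  by rewrite ler_pM2l //; lra.
apply: le_trans; first by apply: ereal_inf_lbound; exists ((1 - s) *: p + s *: a0);
  [apply: seg => //; rewrite s0 s1 | reflexivity].
rewrite -EFinD lee_fin.
have -> : x - ((1 - s) *: p + s *: a0) = (x - p) + s *: (p - a0).
  apply/matrixP => i j; rewrite !mxE; ring.
apply: (le_trans (enormD _ _)); rewrite enormZ ger0_norm; last exact: ltW.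
rewrite -/D'; lra.
Qed.

End Seg.
Theorem lemma5p4 (R : realType) (d l : nat) (X : set 'cV[R]_d)
  (Lam : label l -> 'M[R]_d) (b : label l -> 'cV[R]_d) (v : 'I_l -> 'cV[R]_d) :
  (0 < l)%N ->
  is_polytope X ->
  (forall i, Lam i \in unitmx) ->
  (exists N : 'cV[R]_d -> R, is_norm N /\ forall i, (opnorm N (Lam i) < 1%:E)%E) ->
  (forall i, phi Lam b i @` X `<=` relint X) ->
  (forall j, enorm (v j) = 1) ->
  forall mustar : 'cV[R]_l, W1 X Lam b v mustar ->
  forall (n : nat) (alpha : n.-tuple (label l)), (0 < n)%N ->
  itin X Lam b v mustar alpha ->
  exists c : R, 0 < c /\ exists delta : R, 0 < delta /\
    forall mu : 'cV[R]_l, enorm (mu - mustar) < delta -> enorm (mu - mustar) < 1 ->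
      itin X Lam b v mu alpha /\
      (hausdorff (Aalpha X Lam b v mu alpha) (Aalpha X Lam b v mustar alpha)
         <= (c * enorm (mu - mustar))%:E)%E.
Proof.
move=> _ polyX _ _ _ _ mustar hW n alpha n0 hitin.
have [e [e0 He]] : exists e : R, 0 < e /\
    forall nu, enorm (nu - mustar) < e -> Zset X Lam b v alpha nu.
  apply: contrapT => H; apply: (hW n alpha n0) => e e0; split.
    by exists mustar; split => //; rewrite subrr enorm0.
  apply: contrapT => H2; apply: H; exists e; split => // nu hnu.
  by apply: contrapT => hZ; apply: H2; exists nu.
have [D [D0 HD]] := X_bound polyX.
pose r := e / 2.
have r0 : 0 < r by rewrite /r divr_gt0.
have re : r < e by rewrite /r; lra.
exists (D / r + 1); split.
  have : 0 <= D / r by rewrite divr_ge0 // ltW.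
  lra.
exists r; split => // mu hmu _.
set rho := enorm (mu - mustar).
have rho0 : 0 <= rho by exact: enorm_ge0.
have Zmu : Zset X Lam b v alpha mu by apply: He; exact: lt_trans re.
split; first exact: Zmu.
have cr : (D / r) * rho <= (D / r + 1) * rho by rewrite ler_wpM2r // lerDl.
have Hsc (sg : R) : `|sg| = 1 -> enorm ((sg * (r / rho)) *: (mu - mustar)) < e.
  move=> hsg; rewrite enormZ normrM hsg mul1r -/rho.
  have [->|rhon0] := eqVneq rho 0; first by rewrite mulr0.
  rewrite ger0_norm; last by rewrite divr_ge0 // ltW.
  by rewrite divfK.
have Hmu_eq : rho = 0 -> mu = mustar.
  move=> h; apply/eqP; rewrite -subr_eq0; apply/eqP; exact: enorm_eq0.
have XA m x : Aalpha X Lam b v m alpha x -> X x by move=> h; exact: A_sub_X n0 h.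
rewrite /hausdorff ge_max; apply/andP; split.
- apply: ge_ereal_sup => _ [a Ha <-].
  pose mu' := mustar + ((-1) * (r / rho)) *: (mu - mustar).
  have [z Hz] : Zset X Lam b v alpha mu'.
    apply: He; rewrite /mu' addrAC subrr add0r; apply: Hsc; by rewrite normrN normr1.
  pose t := rho / (rho + r).
  have t0 : 0 <= t by rewrite /t divr_ge0 // addr_ge0 // ltW.
  have t1 : t <= 1 by rewrite /t ler_pdivrMr; [lra | lra].
  have Eq : (1 - t) *: mu + t *: mu' = mustar.
    have [h|rhon0] := eqVneq rho 0.
      by rewrite (Hmu_eq h) /t h mul0r subr0 scale1r scale0r addr0.
    have rr : rho + r != 0 by rewrite gt_eqF //; lra.
    apply/matrixP => i j; rewrite /mu' !mxE /t; field.
    by rewrite rhon0 rr.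
  have Py : Pset X Lam b v alpha mustar ((1 - t) *: a + t *: z).
    rewrite -Eq; apply: (P_convex polyX); [exact: A_sub_P Ha | exact: A_sub_P Hz | by rewrite t0 t1].
  apply: dist_P Py _ => //.
  have -> : a - ((1 - t) *: a + t *: z) = t *: (a - z).
    apply/matrixP => i j; rewrite !mxE; ring.
  rewrite enormZ ger0_norm //.
  have tr : t * r <= rho.
    have -> : rho = t * (rho + r).
      rewrite /t divfK //; rewrite gt_eqF //; lra.
    rewrite mulrDr lerDr; exact: mulr_ge0.
  have tle : t <= rho / r by rewrite ler_pdivlMr.
  apply: le_trans cr.
  have -> : D / r * rho = rho / r * D by ring.
  apply: (@le_trans _ _ (t * D)).
    by apply: ler_wpM2l => //; apply: HD; [exact: XA Ha | exact: XA Hz].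
  by apply: ler_wpM2r.
- apply: ge_ereal_sup => _ [bb Hb <-].
  rewrite (@eq_imagel _ _ _ _ (fun a => (enorm (bb - a))%:E)); last by move=> a _; rewrite enormB.
  pose mu'' := mustar + (1 * (r / rho)) *: (mu - mustar).
  have [w Hw] : Zset X Lam b v alpha mu''.
    apply: He; rewrite /mu'' addrAC subrr add0r; apply: Hsc; by rewrite normr1.
  pose s := rho / r.
  have s0 : 0 <= s by rewrite /s divr_ge0 // ltW.
  have s1 : s <= 1 by rewrite /s ler_pdivrMr // mul1r; exact: ltW.
  have Eq : (1 - s) *: mustar + s *: mu'' = mu.
    have [h|rhon0] := eqVneq rho 0.
      by rewrite (Hmu_eq h) /s h mul0r subr0 scale1r scale0r addr0.
    have rn0 : r != 0 by rewrite gt_eqF.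
    apply/matrixP => i j; rewrite /mu'' !mxE /s; field.
    by rewrite rhon0 rn0.
  have Px : Pset X Lam b v alpha mu ((1 - s) *: bb + s *: w).
    rewrite -Eq; apply: (P_convex polyX); [exact: A_sub_P Hb | exact: A_sub_P Hw | by rewrite s0 s1].
  apply: dist_P Px _ => //.
  have -> : bb - ((1 - s) *: bb + s *: w) = s *: (bb - w).
    apply/matrixP => i j; rewrite !mxE; ring.
  rewrite enormZ ger0_norm //.
  apply: le_trans cr.
  apply: (@le_trans _ _ (s * D)).
    by apply: ler_wpM2l => //; apply: HD; [exact: XA Hb | exact: XA Hw].
  by rewrite /s le_eqVlt; apply/orP; left; apply/eqP; ring.
Qed.
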